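(* Assume the structure is rigid. Fix $\zeta=(\xi,\eta)\in\Omega$ and let $Z(z,\zeta):=(y-\eta)-i(z)(x-\xi)$, $d\tilde z:=dy-i(z)\,dx$, and $j(\zeta):=\frac{2i(\zeta)+\beta(\zeta)}{\sqrt{\Delta(\zeta)}}\in A_\zeta$. Then \[ \lim_{r\to0^+}\int^{(\zeta)}_{\partial B_r(\zeta)}Z(z,\zeta)^{-1}\,d\tilde z=2\pi\,j(\zeta)\quad\text{in }A_\zeta, \] where $\partial B_r(\zeta)$ is the positively oriented circle of radius $r$.
   Context: Let $\Omega\subset\mathbb R^2$ be open with coordinates $(x,y)$, $\alpha,\beta\in C^1(\Omega,\mathbb R)$ with $\Delta:=4\alpha-\beta^2>0$ on $\Omega$. For $z\in\Omega$ let $A_z:=\mathbb R[X]/(X^2+\beta(z)X+\alpha(z))$ and $i(z)$ the class of $X$, so $i^2+\beta i+\alpha=0$ and $\{1,i(z)\}$ is a real basis; sections $h=u+v\,i$ ($u,v$ real functions) are multiplied fiberwise. The derivatives of the generator are $i_x:=-(\alpha_x+\beta_x i)(2i+\beta)^{-1}$, $i_y:=-(\alpha_y+\beta_y i)(2i+\beta)^{-1}$; the structure is rigid if $i_x+i\,i_y=0$ on $\Omega$. Coefficientwise integral into a fixed fiber: for a section $h=u+v\,i$ and a piecewise $C^1$ curve $\gamma$, using $i^2=-\beta i-\alpha$ one has $h\,d\tilde z=(u\,dy+v\alpha\,dx)+(v\,dy-u\,dx+v\beta\,dx)\,i$, and one defines \[ \int^{(\zeta)}_\gamma h\,d\tilde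 z:=\Bigl(\int_\gamma u\,dy+v\alpha\,dx\Bigr)+\Bigl(\int_\gamma v\,dy-u\,dx+v\beta\,dx\Bigr)\,i(\zeta)\in A_\zeta . \] For $z\neq\zeta$, $Z(z,\zeta)$ is invertible in $A_z$. *)

(* Defs.v *)
From Stdlib Require Import Reals Lra.
From Coquelicot Require Import Coquelicot.
Open Scope R_scope.

(* An element  u + v i(z)  of the fiber  A_z = R[X]/(X^2 + beta X + alpha)
   is represented by its coordinates (u, v) in the real basis {1, i(z)}.
   The fiber algebra depends only on the numbers a = alpha(z), b = beta(z). *)

(* product, using i^2 = - b i - a *)
Definition mulA (a b : R) (p q : R * R) : R * R :=
  (fst p * fst q - a * snd p * snd q,
   fst p * snd q + snd p * fst q - b * snd p * snd q).

Definition addA (p q : R * R) : R * R := (fst p + fst q, snd p + snd q).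

(* norm  (u + v i)((u - b v) - v i) = u^2 - b u v + a v^2 *)
Definition normA (a b : R) (p : R * R) : R :=
  fst p * fst p - b * fst p * snd p + a * snd p * snd p.

Definition invA (a b : R) (p : R * R) : R * R :=
  ((fst p - b * snd p) / normA a b p, - snd p / normA a b p).

Lemma mulA_invA (a b : R) (p : R * R) :
  normA a b p <> 0 -> mulA a b p (invA a b p) = (1, 0).
Proof.
  destruct p as [u v]; unfold mulA, invA, normA; simpl; intro H.
  f_equal; field; exact H.
Qed.

Definition dx (f : R -> R -> R) (x y : R) : R := Derive (fun t => f t y) x.
Definition dy (f : R -> R -> R) (x y : R) : R := Derive (fun t => f x t) y.

Definition C1_on (Omega : R * R -> Prop) (f : R -> R -> R) : Prop :=
  forall p : R * R, Omega p ->
    ex_derive (fun t => f t (snd p)) (fst p) /\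
    ex_derive (fun t => f (fst p) t) (snd p) /\
    continuous (fun q : R * R => dx f (fst q) (snd q)) p /\
    continuous (fun q : R * R => dy f (fst q) (snd q)) p.

Definition i_x (alpha beta : R -> R -> R) (x y : R) : R * R :=
  let a := alpha x y in let b := beta x y in
  mulA a b (- dx alpha x y, - dx beta x y) (invA a b (b, 2)).

Definition i_y (alpha beta : R -> R -> R) (x y : R) : R * R :=
  let a := alpha x y in let b := beta x y in
  mulA a b (- dy alpha x y, - dy beta x y) (invA a b (b, 2)).

Definition rigid (Omega : R * R -> Prop) (alpha beta : R -> R -> R) : Prop :=
  forall x y : R, Omega (x, y) ->
    addA (i_x alpha beta x y)
         (mulA (alpha x y) (beta x y) (0, 1) (i_y alpha beta x y)) = (0, 0).

Definition Zsec (xi eta x y : R) : R * R := (y - eta, - (x - xi)).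

Definition Zinv (alpha beta : R -> R -> R) (xi eta x y : R) : R * R :=
  invA (alpha x y) (beta x y) (Zsec xi eta x y).

(* Coefficientwise integral into the fiber A_zeta of a section
   h = u + v i over the positively oriented circle of radius r centred
   at (xi, eta), parametrised by t |-> (xi + r cos t, eta + r sin t),
   t in [0, 2 pi]:
     ( \int u dy + v alpha dx ,  \int v dy - u dx + v beta dx ),
   the pair being the coordinates in the basis {1, i(zeta)}. *)
Definition circle_int (alpha beta : R -> R -> R) (h : R -> R -> R * R)
    (xi eta r : R) : R * R :=
  let X t := xi + r * cos t in
  let Y t := eta + r * sin t in
  let DX t := - (r * sin t) in
  let DY t := r * cos t in
  (RInt (fun t => fst (h (X t) (Y t)) * DY t
                  + snd (h (X t) (Y t)) * alpha (X t) (Y t) * DX t) 0 (2 * PI),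
   RInt (fun t => snd (h (X t) (Y t)) * DY t
                  - fst (h (X t) (Y t)) * DX t
                  + snd (h (X t) (Y t)) * beta (X t) (Y t) * DX t) 0 (2 * PI)).

Definition jA (alpha beta : R -> R -> R) (xi eta : R) : R * R :=
  let D := 4 * alpha xi eta - (beta xi eta) ^ 2 in
  (beta xi eta / sqrt D, 2 / sqrt D).

(* Main.v *)
Require Import Defs.
From Stdlib Require Import Reals Lra.
From Coquelicot Require Import Coquelicot.
Open Scope R_scope.

Lemma ballR (x y : R) (e : R) : ball x e y <-> Rabs (y - x) < e.
Proof. reflexivity. Qed.
Lemma ballP (p q : R * R) (e : R) : ball p e q <-> ball (fst p) e (fst q) /\ ball (snd p) e (snd q).
Proof. reflexivity. Qed.

Lemma cont_bound (g : R * R -> R) (p : R * R) :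
  continuous g p -> exists e : posreal, forall q, Rabs (fst q - fst p) < e -> Rabs (snd q - snd p) < e ->
    Rabs (g q) <= Rabs (g p) + 1.
Proof.
  intros Hc. destruct (proj1 (filterlim_locally _ _) Hc (mkposreal 1 Rlt_0_1)) as [e He].
  exists e. intros q H1 H2. assert (H := He q (conj H1 H2)).
  change (Rabs (g q - g p) < 1) in H.
  assert (Rabs (g q) - Rabs (g p) <= Rabs (g q - g p)) by apply Rabs_triang_inv. lra.
Qed.

Lemma mvt_bound (h : R -> R) (x0 x M : R) :
  (forall t, Rmin x0 x <= t <= Rmax x0 x -> ex_derive h t /\ Rabs (Derive h t) <= M) ->
  Rabs (h x - h x0) <= M * Rabs (x - x0).
Proof.
  intros H.
  destruct (MVT_gen h x0 x (Derive h)) as [c [Hc Eq]].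
  - intros t Ht. apply (Derive_correct h t). apply H. lra.
  - intros t Ht. apply (proj2 (continuity_pt_filterlim h t)). exact (ex_derive_continuous (K:=R_AbsRing) (V:=R_NormedModule) h t (proj1 (H t Ht))).
  - rewrite Eq, Rabs_mult. apply Rmult_le_compat_r. apply Rabs_pos. apply H. exact Hc.
Qed.

Lemma loc_lip (Omega : R * R -> Prop) (f : R -> R -> R) (p : R * R) :
  open Omega -> C1_on Omega f -> Omega p ->
  exists d M, 0 < d /\ 0 <= M /\ forall x y, Rabs (x - fst p) < d -> Rabs (y - snd p) < d ->
    Omega (x, y) /\ Rabs (f x y - f (fst p) (snd p)) <= M * (Rabs (x - fst p) + Rabs (y - snd p)).
Proof.
  intros HO Hf Hp.
  destruct (HO p Hp) as [e0 He0].
  destruct (Hf p Hp) as [_ [_ [Cx Cy]]].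
  destruct (cont_bound _ _ Cx) as [e1 He1].
  destruct (cont_bound _ _ Cy) as [e2 He2].
  set (d := Rmin e0 (Rmin e1 e2)).
  assert (Hd0 : d <= e0) by apply Rmin_l.
  assert (Hd1 : d <= e1) by (eapply Rle_trans; [apply Rmin_r|apply Rmin_l]).
  assert (Hd2 : d <= e2) by (eapply Rle_trans; [apply Rmin_r|apply Rmin_r]).
  assert (Hdpos : 0 < d) by (apply Rmin_glb_lt; [apply cond_pos|apply Rmin_glb_lt; apply cond_pos]).
  set (M := Rabs (dx f (fst p) (snd p)) + Rabs (dy f (fst p) (snd p)) + 1).
  assert (HOm : forall x y, Rabs (x - fst p) < d -> Rabs (y - snd p) < d -> Omega (x, y)).
  { intros x y Hx Hy. apply He0. apply ballP; split; apply ballR; simpl; lra. }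
  exists d, M. split; [exact Hdpos|]. split; [unfold M; pose proof (Rabs_pos (dx f (fst p) (snd p))); pose proof (Rabs_pos (dy f (fst p) (snd p))); lra|].
  intros x y Hx Hy. split; [apply HOm; auto|].
  destruct p as [x0 y0]; simpl in *.
  assert (B1 : Rabs (f x y - f x0 y) <= M * Rabs (x - x0)).
  { apply (mvt_bound (fun t => f t y)). intros t Ht.
    assert (Ht' : Rabs (t - x0) <= Rabs (x - x0)).
    { unfold Rmin, Rmax in Ht. destruct (Rle_dec x0 x); unfold Rabs; repeat destruct Rcase_abs; lra. }
    destruct (Hf (t, y)) as [Hex [_ _]]. apply HOm; lra.
    split; [exact Hex|].
    assert (Hb := He1 (t, y)). simpl in Hb. unfold dx in Hb.
    assert (Rabs (Derive (fun t0 : R => f t0 y) t) <= Rabs (dx f x0 y0) + 1) by (apply Hb; lra).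
    unfold M. pose proof (Rabs_pos (dy f x0 y0)). lra. }
  assert (B2 : Rabs (f x0 y - f x0 y0) <= M * Rabs (y - y0)).
  { apply (mvt_bound (fun t => f x0 t)). intros t Ht.
    assert (Ht' : Rabs (t - y0) <= Rabs (y - y0)).
    { unfold Rmin, Rmax in Ht. destruct (Rle_dec y0 y); unfold Rabs; repeat destruct Rcase_abs; lra. }
    destruct (Hf (x0, t)) as [_ [Hey _]]. apply HOm; [rewrite Rminus_diag, Rabs_R0|]; lra.
    split; [exact Hey|].
    assert (Hb := He2 (x0, t)). simpl in Hb. unfold dy in Hb.
    assert (Rabs (Derive (fun t0 : R => f x0 t0) t) <= Rabs (dy f x0 y0) + 1).
    { apply Hb; [rewrite Rminus_diag, Rabs_R0; apply cond_pos|lra]. }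
    unfold M. pose proof (Rabs_pos (dx f x0 y0)). lra. }
  replace (f x y - f x0 y0) with ((f x y - f x0 y) + (f x0 y - f x0 y0)) by ring.
  eapply Rle_trans; [apply Rabs_triang|]. lra.
Qed.

Lemma cont2 (Omega : R * R -> Prop) (f : R -> R -> R) (p : R * R) :
  open Omega -> C1_on Omega f -> Omega p ->
  continuous (fun q : R * R => f (fst q) (snd q)) p.
Proof.
  intros HO Hf Hp.
  destruct (loc_lip Omega f p HO Hf Hp) as [d [M [Hd [HM H]]]].
  apply filterlim_locally. intros eps.
  assert (He : 0 < Rmin d (eps / (2 * (M + 1)))).
  { apply Rmin_glb_lt; [lra|]. apply Rdiv_lt_0_compat; [apply cond_pos|lra]. }
  exists (mkposreal _ He). intros q Hq. apply ballP in Hq. destruct Hq as [Hq1 Hq2].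
  change (Rabs (fst q - fst p) < Rmin d (eps / (2 * (M + 1)))) in Hq1.
  change (Rabs (snd q - snd p) < Rmin d (eps / (2 * (M + 1)))) in Hq2.
  assert (Hm1 := Rmin_l d (eps / (2 * (M + 1)))).
  assert (Hm2 := Rmin_r d (eps / (2 * (M + 1)))).
  assert (Hx1 : Rabs (fst q - fst p) < d) by (change (Rabs (fst q - fst p) < Rmin d (eps / (2 * (M + 1)))) in Hq1; lra).
  assert (Hx2 : Rabs (snd q - snd p) < d) by (change (Rabs (snd q - snd p) < Rmin d (eps / (2 * (M + 1)))) in Hq2; lra).
  destruct (H (fst q) (snd q) Hx1 Hx2) as [_ Hb].
  change (Rabs (f (fst q) (snd q) - f (fst p) (snd p)) < eps).
  eapply Rle_lt_trans; [exact Hb|].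
  set (r := Rmin d (eps / (2 * (M + 1)))) in *.
  assert (Hr : r * (2 * (M + 1)) <= eps).
  { apply Rle_trans with (eps / (2 * (M + 1)) * (2 * (M + 1))).
    apply Rmult_le_compat_r; lra. right; field; lra. }
  assert (0 < eps) by apply cond_pos.
  nra.
Qed.

Lemma cder (f : R -> R) x : ex_derive f x -> continuous f x.
Proof. exact (ex_derive_continuous (K:=R_AbsRing) (V:=R_NormedModule) f x). Qed.

Lemma cont_circle (Omega : R * R -> Prop) (f : R -> R -> R) (xi eta r t0 : R) :
  open Omega -> C1_on Omega f -> Omega (xi + r * cos t0, eta + r * sin t0) ->
  continuous (fun t => f (xi + r * cos t) (eta + r * sin t)) t0.
Proof.
  intros HO Hf Hp.
  apply (continuous_comp_2 (fun t => xi + r * cos t) (fun t => eta + r * sin t) f).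
  - apply cder. auto_derive. auto.
  - apply cder. auto_derive. auto.
  - exact (cont2 Omega f _ HO Hf Hp).
Qed.

Lemma cplus (f g : R -> R) x : continuous f x -> continuous g x -> continuous (fun t => f t + g t) x.
Proof. intros; apply (continuous_plus f g); auto. Qed.
Lemma cminus (f g : R -> R) x : continuous f x -> continuous g x -> continuous (fun t => f t - g t) x.
Proof. intros; apply (continuous_minus f g); auto. Qed.
Lemma cmul (f g : R -> R) x : continuous f x -> continuous g x -> continuous (fun t => f t * g t) x.
Proof. intros; apply (continuous_mult f g); auto. Qed.
Lemma cinv (f : R -> R) x : continuous f x -> f x <> 0 -> continuous (fun t => / f t) x.
Proof. intros; apply (continuous_Rinv_comp f); auto. Qed.
Lemma csin x : continuous sin x.
Proof. apply cder. auto_derive. auto. Qed.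
Lemma ccos x : continuous cos x.
Proof. apply cder. auto_derive. auto. Qed.
Lemma cconst (c : R) x : continuous (fun _ : R => c) x.
Proof. apply continuous_const. Qed.

Definition NN a b t := sin t * sin t + b * (sin t * cos t) + a * (cos t * cos t).
Definition P1 a b t := sin t * cos t + b * (cos t * cos t) - a * (sin t * cos t).
Definition F1 a b t := P1 a b t / NN a b t.
Definition F2 a b t := / NN a b t.

Lemma sc1 t : sin t * sin t + cos t * cos t = 1.
Proof. pose proof (sin2_cos2 t). unfold Rsqr in H. lra. Qed.

Lemma NN_lower a b t : 0 < 4*a - b^2 -> (4*a - b^2)/(4*(1+a)) <= NN a b t.
Proof.
  intros HD. assert (Ha : 0 < 1 + a) by nra.
  assert (Id : (1+a) * NN a b t - (a - b^2/4) =
     (sin t + b/2 * cos t)^2 + (b/2 * sin t + a * cos t)^2).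
  { pose proof (sc1 t). unfold NN.
    replace (a - b^2/4) with ((a - b^2/4) * (sin t * sin t + cos t * cos t)) by (rewrite H; ring).
    field. }
  apply Rle_div_l; [lra|].
  assert (0 <= (sin t + b/2 * cos t)^2 + (b/2 * sin t + a * cos t)^2) by (apply Rplus_le_le_0_compat; apply pow2_ge_0).
  set (X := NN a b t) in *. nra.
Qed.

Lemma ha (p q : R -> R) t p' q' : is_derive p t p' -> is_derive q t q' -> (q t <> 0 \/ 0 < p t) ->
 is_derive (fun t => 2*atan(q t / (p t + sqrt(p t^2 + q t^2)))) t ((p t * q' - q t * p')/(p t^2 + q t^2)).
Proof.
intros Hp Hq H.
assert (HS : 0 < p t ^2 + q t ^2) by (destruct H; nra).
assert (E : p t * (p t * 1) + q t * (q t * 1) = p t ^2 + q t ^2) by ring.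
assert (Hr0 := sqrt_lt_R0 _ HS).
assert (Hr2 := sqrt_sqrt _ (Rlt_le _ _ HS)).
set (r := sqrt (p t ^ 2 + q t ^ 2)) in *.
assert (Hpr : 0 < p t + r).
{ destruct H as [H|H]; [|lra].
  destruct (Rle_lt_dec (p t) 0); [|lra].
  assert (p t * p t < r * r) by nra. nra. }
auto_derive.
- rewrite E. fold r. repeat split; try (eexists; eassumption); lra.
- replace (Derive (fun x => q x) t) with q' by (symmetry; apply is_derive_unique; exact Hq).
  replace (Derive (fun x => p x) t) with p' by (symmetry; apply is_derive_unique; exact Hp).
  rewrite E; fold r.
  set (P := p t) in *. set (Q := q t) in *.
  assert (Q*Q = r*r - P*P) by lra.
  field_simplify; [| nra | repeat split; nra ].
  replace (Q^2) with (r^2 - P^2) by nra.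
  field. split; [nra|]. replace (P ^ 2 * r + 2 * P * r ^ 2 + r ^ 3 + r * (r ^ 2 - P ^ 2)) with (2*r*r*(P+r)) by ring. apply Rmult_integral_contrapositive; split; [nra|lra].
Qed.

Lemma atan_sum b k : 0 < k ->
  2*atan(k/(-(b/2) + sqrt((-(b/2))^2 + k^2))) - 2*atan(-k/(b/2 + sqrt((b/2)^2+k^2))) = PI.
Proof.
  intros Hk.
  replace ((-(b/2))^2) with ((b/2)^2) by ring.
  assert (HS : 0 < (b/2)^2 + k^2) by nra.
  assert (Hs2 := sqrt_sqrt _ (Rlt_le _ _ HS)).
  assert (Hs0 := sqrt_lt_R0 _ HS).
  set (s := sqrt ((b/2)^2 + k^2)) in *.
  assert (H1 : 0 < b/2 + s) by nra.
  assert (H2 : 0 < -(b/2) + s) by nra.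
  assert (Hv : 0 < k / (b/2 + s)) by (apply Rdiv_lt_0_compat; lra).
  replace (k / (-(b/2) + s)) with (/ (k / (b/2 + s))).
  2:{ field_simplify_eq; [nra| repeat split; lra]. }
  rewrite atan_inv by exact Hv.
  replace (-k / (b/2 + s)) with (-(k/(b/2+s))) by (unfold Rdiv; ring).
  rewrite atan_opp. field.
Qed.

Lemma NN_pos a b t : 0 < 4*a - b^2 -> 0 < NN a b t.
Proof.
  intros HD. eapply Rlt_le_trans; [|apply NN_lower; exact HD].
  apply Rdiv_lt_0_compat; nra.
Qed.

Lemma half_int a b (k : R) (p q : R -> R) (dp dq : R -> R) (u v : R) :
  0 < 4*a - b^2 -> k * k = (4*a - b^2)/4 -> u <= v ->
  (forall t, is_derive p t (dp t)) -> (forall t, is_derive q t (dq t)) ->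
  (forall t, u <= t <= v -> q t <> 0 \/ 0 < p t) ->
  (forall t, p t * dq t - q t * dp t = k) ->
  (forall t, p t ^2 + q t ^2 = NN a b t) ->
  is_RInt (fun t => k / NN a b t) u v
    (2*atan(q v/(p v + sqrt(p v^2 + q v^2))) - 2*atan(q u/(p u + sqrt(p u^2 + q u^2)))).
Proof.
  intros HD Hk Huv Hp Hq Hc Hnum Hden.
  apply (is_RInt_derive (fun t => 2*atan(q t/(p t + sqrt(p t^2 + q t^2))))).
  - intros t Ht. rewrite Rmin_left, Rmax_right in Ht by lra.
    rewrite <- (Hnum t), <- (Hden t). apply ha; auto.
  - intros t _. apply cder. assert (HN := NN_pos a b t HD). unfold NN in *. auto_derive. repeat split; auto; lra.
Qed.

Lemma int_kN a b : 0 < 4*a - b^2 ->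
  is_RInt (fun t => (sqrt (4*a - b^2) / 2) / NN a b t) 0 (2*PI) (2*PI).
Proof.
  intros HD.
  set (k := sqrt (4*a - b^2) / 2).
  assert (Hk : k * k = (4*a - b^2)/4).
  { unfold k. assert (H := sqrt_sqrt _ (Rlt_le _ _ HD)). replace (sqrt (4 * a - b ^ 2) / 2 * (sqrt (4 * a - b ^ 2) / 2)) with ((sqrt (4 * a - b ^ 2) * sqrt (4 * a - b ^ 2)) / 4) by field. rewrite H. reflexivity. }
  assert (Hk0 : 0 < k) by (unfold k; apply Rdiv_lt_0_compat; [apply sqrt_lt_R0; exact HD|lra]).
  assert (Hpi := PI_RGT_0).
  replace (2*PI) with (plus PI PI) at 2 by (unfold plus; simpl; ring).
  apply (is_RInt_Chasles (V:=R_NormedModule) _ 0 PI (2*PI)).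
  - assert (H := half_int a b k (fun t => sin t + b/2*cos t) (fun t => -(k*cos t))
        (fun t => cos t - b/2*sin t) (fun t => k*sin t) 0 PI HD Hk (Rlt_le _ _ Hpi)).
    cbv beta in H. rewrite sin_PI, cos_PI, sin_0, cos_0 in H.
    replace (0 + b/2 * -1) with (-(b/2)) in H by ring.
    replace (-(k * -1)) with k in H by ring.
    replace (0 + b/2 * 1) with (b/2) in H by ring.
    replace (-(k * 1)) with (-k) in H by ring.
    replace ((-k)^2) with (k^2) in H by ring. rewrite atan_sum in H by exact Hk0.
    apply H.
    + intros t. auto_derive; auto; ring.
    + intros t. auto_derive; auto; ring.
    + intros t Ht. destruct (Req_dec (cos t) 0) as [Hc|Hc].
      * right. assert (Hs := sin_ge_0 t (proj1 Ht) (proj2 Ht)). pose proof (sc1 t).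
        rewrite Hc in *. nra.
      * left. intro Hq. apply Hc. nra.
    + intros t. pose proof (sc1 t). nra.
    + intros t. unfold NN. pose proof (sc1 t). nra.
  - assert (H := half_int a b k (fun t => -(sin t + b/2*cos t)) (fun t => k*cos t)
        (fun t => -(cos t - b/2*sin t)) (fun t => -(k*sin t)) PI (2*PI) HD Hk ltac:(lra)).
    cbv beta in H. rewrite sin_PI, cos_PI, sin_2PI, cos_2PI in H.
    replace (-(0 + b/2 * 1)) with (-(b/2)) in H by ring.
    replace (k * 1) with k in H by ring.
    replace (-(0 + b/2 * -1)) with (b/2) in H by ring.
    replace (k * -1) with (-k) in H by ring.
    replace ((-k)^2) with (k^2) in H by ring.
    rewrite atan_sum in H by exact Hk0.
    apply H.
    + intros t. auto_derive; auto; ring.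
    + intros t. auto_derive; auto; ring.
    + intros t Ht. destruct (Req_dec (cos t) 0) as [Hc|Hc].
      * right. assert (Hs := sin_le_0 t (proj1 Ht) (proj2 Ht)). pose proof (sc1 t).
        rewrite Hc in *. nra.
      * left. intro Hq. apply Hc. nra.
    + intros t. pose proof (sc1 t). nra.
    + intros t. unfold NN. pose proof (sc1 t). nra.
Qed.

Lemma int_F2 a b : 0 < 4*a - b^2 ->
  is_RInt (F2 a b) 0 (2*PI) (2*PI*(2/sqrt (4*a - b^2))).
Proof.
  intros HD.
  assert (Hs : 0 < sqrt (4*a - b^2)) by (apply sqrt_lt_R0; exact HD).
  pose proof (int_kN a b HD) as HkN. set (s := sqrt (4*a - b^2)) in *.
  assert (H := is_RInt_scal _ 0 (2*PI) (/ (s / 2)) _ HkN).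
  replace (2*PI*(2/s)) with (scal (/ (s / 2)) (2*PI)).
  2:{ unfold scal; simpl; unfold mult; simpl. field. lra. }
  eapply is_RInt_ext; [|exact H].
  intros t _. unfold scal; simpl; unfold mult; simpl. unfold F2.
  assert (HN := NN_pos a b t HD). field. split; lra.
Qed.

Definition NNd a b t := 2*(sin t*cos t) + b*(cos t*cos t - sin t*sin t) - 2*a*(sin t*cos t).

Lemma int_NNd a b : 0 < 4*a - b^2 ->
  is_RInt (fun t => NNd a b t / NN a b t) 0 (2*PI) 0.
Proof.
  intros HD.
  assert (H : is_RInt (fun t => NNd a b t / NN a b t) 0 (2*PI)
             (minus (ln (NN a b (2*PI))) (ln (NN a b 0)))).
  { apply (is_RInt_derive (fun t => ln (NN a b t))).
    - intros t _. assert (HN := NN_pos a b t HD). unfold NN, NNd in *.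
      auto_derive; [lra|]. field. lra.
    - intros t _. apply cder. assert (HN := NN_pos a b t HD). unfold NN, NNd in *.
      auto_derive. repeat split; auto; lra. }
  replace (NN a b (2*PI)) with (NN a b 0) in H
    by (unfold NN; rewrite sin_2PI, cos_2PI, sin_0, cos_0; reflexivity).
  replace (minus (ln (NN a b 0)) (ln (NN a b 0))) with 0 in H
    by (unfold minus, plus, opp; simpl; ring).
  exact H.
Qed.

Lemma int_F1 a b : 0 < 4*a - b^2 ->
  is_RInt (F1 a b) 0 (2*PI) (2*PI*(b/sqrt (4*a - b^2))).
Proof.
  intros HD.
  assert (Hs : 0 < sqrt (4*a - b^2)) by (apply sqrt_lt_R0; exact HD).
  pose proof (int_kN a b HD) as HkN. set (s := sqrt (4*a - b^2)) in *.
  assert (H := is_RInt_plus _ _ 0 (2*PI) _ _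
     (is_RInt_scal _ 0 (2*PI) (1/2) _ (int_NNd a b HD))
     (is_RInt_scal _ 0 (2*PI) (b/2) _ (int_F2 a b HD : is_RInt (F2 a b) 0 (2*PI) (2*PI*(2/s))))).
  replace (2*PI*(b/s)) with
     (plus (scal (1/2) 0) (scal (b/2) (2*PI*(2/s)))).
  2:{ unfold plus, scal; simpl; unfold mult; simpl. field. lra. }
  eapply is_RInt_ext; [|exact H].
  intros t _. unfold plus, scal; simpl; unfold mult; simpl. unfold F1, F2, P1, NNd.
  assert (HN := NN_pos a b t HD). pose proof (sc1 t). unfold NN in *.
  field_simplify; [|lra|lra]. 
  replace (- sin t ^ 2 * b - 2 * sin t * cos t * a + 2 * sin t * cos t + cos t ^ 2 * b + b)
    with (2*(- sin t * cos t * a + sin t * cos t + cos t ^ 2 * b)).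
  - field. nra.
  - apply Rminus_diag_uniq.
    match goal with |- ?X - ?Y = 0 => replace (X - Y) with (b*((sin t * sin t + cos t * cos t) - 1)) by ring end.
    rewrite H0; ring.
Qed.

Lemma lin_bound u v x y : Rabs x <= 1 -> Rabs y <= 1 -> Rabs (u*x + v*y) <= Rabs u + Rabs v.
Proof.
  intros Hx Hy. eapply Rle_trans; [apply Rabs_triang|]. rewrite 2!Rabs_mult.
  pose proof (Rabs_pos u). pose proof (Rabs_pos v). pose proof (Rabs_pos x). pose proof (Rabs_pos y).
  nra.
Qed.

Lemma frac_bound P N P0 N0 d K m : 0 < m -> m <= N0 -> m/2 <= N -> Rabs N0 <= K -> Rabs P0 <= K ->
  Rabs (P - P0) <= d -> Rabs (N - N0) <= d -> Rabs (P/N - P0/N0) <= 4*K/(m*m)*d.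
Proof.
  intros Hm H0 H1 HN0 HP0 HP HN.
  replace (P/N - P0/N0) with (((P-P0)*N0 - P0*(N-N0)) * / (N*N0)) by (field; lra).
  assert (Hnum : Rabs ((P-P0)*N0 - P0*(N-N0)) <= 2*K*d).
  { unfold Rminus at 1. eapply Rle_trans; [apply Rabs_triang|]. rewrite Rabs_Ropp, 2!Rabs_mult.
    pose proof (Rabs_pos (P-P0)). pose proof (Rabs_pos (N-N0)). pose proof (Rabs_pos N0).
    pose proof (Rabs_pos P0). nra. }
  assert (HY : m*m/2 <= N*N0) by nra.
  rewrite Rabs_mult, Rabs_inv, (Rabs_right (N*N0)) by nra.
  assert (Hi : / (N*N0) <= / (m*m/2)) by (apply Rinv_le_contravar; nra).
  assert (0 <= / (N*N0)) by (apply Rlt_le, Rinv_0_lt_compat; nra).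
  pose proof (Rabs_pos ((P-P0)*N0 - P0*(N-N0))).
  apply Rle_trans with (2*K*d * / (m*m/2)).
  - apply Rle_trans with (2*K*d * / (N*N0)).
    + apply Rmult_le_compat_r; lra.
    + apply Rmult_le_compat_l; [|exact Hi]. lra.
  - right. field. lra.
Qed.

Lemma abs_sin t : Rabs (sin t) <= 1.
Proof. apply Rabs_le. apply SIN_bound. Qed.
Lemma abs_cos t : Rabs (cos t) <= 1.
Proof. apply Rabs_le. apply COS_bound. Qed.
Lemma abs_prod x y : Rabs x <= 1 -> Rabs y <= 1 -> Rabs (x*y) <= 1.
Proof. intros. rewrite Rabs_mult. pose proof (Rabs_pos x). pose proof (Rabs_pos y). nra. Qed.

Lemma perturb a0 b0 a b t m K :
  0 < 4*a0 - b0^2 -> m = (4*a0 - b0^2)/(4*(1+a0)) -> K = 1 + Rabs a0 + Rabs b0 ->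
  Rabs (a - a0) + Rabs (b - b0) <= m/2 ->
  m/2 <= NN a b t /\
  Rabs (F1 a b t - F1 a0 b0 t) <= 4*K/(m*m) * (Rabs (a - a0) + Rabs (b - b0)) /\
  Rabs (F2 a b t - F2 a0 b0 t) <= 4*K/(m*m) * (Rabs (a - a0) + Rabs (b - b0)).
Proof.
  intros HD Hm HK Hd.
  assert (Hm0 : 0 < m) by (rewrite Hm; apply Rdiv_lt_0_compat; nra).
  assert (HN0 : m <= NN a0 b0 t) by (rewrite Hm; apply NN_lower; exact HD).
  pose proof (abs_sin t) as Hs. pose proof (abs_cos t) as Hc.
  assert (Hsc : Rabs (sin t * cos t) <= 1) by (apply abs_prod; auto).
  assert (Hcc : Rabs (cos t * cos t) <= 1) by (apply abs_prod; auto).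
  assert (Hss : Rabs (sin t * sin t) <= 1) by (apply abs_prod; auto).
  assert (Hmsc : Rabs (- (sin t * cos t)) <= 1) by (rewrite Rabs_Ropp; auto).
  assert (HdN : Rabs (NN a b t - NN a0 b0 t) <= Rabs (a - a0) + Rabs (b - b0)).
  { replace (NN a b t - NN a0 b0 t) with ((b - b0)*(sin t * cos t) + (a - a0)*(cos t * cos t))
      by (unfold NN; ring).
    rewrite Rplus_comm. apply lin_bound; auto. }
  assert (HdP : Rabs (P1 a b t - P1 a0 b0 t) <= Rabs (a - a0) + Rabs (b - b0)).
  { replace (P1 a b t - P1 a0 b0 t) with ((b - b0)*(cos t * cos t) + (a - a0)*(- (sin t * cos t)))
      by (unfold P1; ring).
    rewrite Rplus_comm. apply lin_bound; auto. }
  assert (HKN : Rabs (NN a0 b0 t) <= K).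
  { rewrite HK. unfold NN. eapply Rle_trans; [apply Rabs_triang|].
    pose proof (lin_bound b0 a0 (sin t * cos t) (cos t * cos t) Hsc Hcc).
    replace (sin t * sin t + b0 * (sin t * cos t)) with (1 * (sin t * sin t) + b0 * (sin t * cos t)) by ring.
    assert (Rabs (1 * (sin t * sin t) + b0 * (sin t * cos t)) <= Rabs 1 + Rabs b0) by (apply lin_bound; auto).
    rewrite Rabs_R1 in H0. rewrite Rabs_mult.
    pose proof (Rabs_pos a0). nra. }
  assert (HKP : Rabs (P1 a0 b0 t) <= K).
  { rewrite HK. unfold P1. unfold Rminus. eapply Rle_trans; [apply Rabs_triang|].
    rewrite Rabs_Ropp, Rabs_mult.
    assert (Rabs (1 * (sin t * cos t) + b0 * (cos t * cos t)) <= Rabs 1 + Rabs b0) by (apply lin_bound; auto).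
    rewrite Rabs_R1 in H. rewrite Rmult_1_l in H.
    pose proof (Rabs_pos a0). nra. }
  assert (HN : m/2 <= NN a b t).
  { assert (NN a0 b0 t - NN a b t <= Rabs (NN a b t - NN a0 b0 t)).
    { rewrite <- Rabs_Ropp. replace (- (NN a b t - NN a0 b0 t)) with (NN a0 b0 t - NN a b t) by ring.
      apply Rle_abs. }
    lra. }
  split; [exact HN|]. split.
  - unfold F1. apply frac_bound; auto.
  - unfold F2. replace (/ NN a b t) with (1 / NN a b t) by (unfold Rdiv; ring).
    replace (/ NN a0 b0 t) with (1 / NN a0 b0 t) by (unfold Rdiv; ring).
    apply frac_bound; auto.
    + rewrite HK, Rabs_R1. pose proof (Rabs_pos a0). pose proof (Rabs_pos b0). lra.
    + rewrite Rminus_diag, Rabs_R0. pose proof (Rabs_pos (a - a0)). pose proof (Rabs_pos (b - b0)). lra.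
Qed.

Lemma integrand_eq a b r t xi eta : r <> 0 -> NN a b t <> 0 ->
  fst (invA a b (Zsec xi eta (xi + r*cos t) (eta + r*sin t))) * (r*cos t)
   + snd (invA a b (Zsec xi eta (xi + r*cos t) (eta + r*sin t))) * a * (- (r*sin t)) = F1 a b t /\
  snd (invA a b (Zsec xi eta (xi + r*cos t) (eta + r*sin t))) * (r*cos t)
   - fst (invA a b (Zsec xi eta (xi + r*cos t) (eta + r*sin t))) * (-(r*sin t))
   + snd (invA a b (Zsec xi eta (xi + r*cos t) (eta + r*sin t))) * b * (-(r*sin t)) = F2 a b t.
Proof.
  intros Hr HN.
  assert (E : normA a b (Zsec xi eta (xi + r*cos t) (eta + r*sin t)) = r*r*NN a b t)
    by (unfold normA, Zsec, NN; simpl; ring).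
  unfold invA. rewrite E. unfold Zsec, F1, F2, P1; simpl.
  pose proof (sc1 t).
  split.
  - field. auto.
  - replace (/ NN a b t) with ((sin t * sin t + cos t * cos t) / NN a b t) by (rewrite H; field; auto).
    field. auto.
Qed.

Lemma contF (A B : R -> R) z : continuous A z -> continuous B z -> NN (A z) (B z) z <> 0 ->
  continuous (fun t => F1 (A t) (B t) t) z /\ continuous (fun t => F2 (A t) (B t) t) z.
Proof.
  intros HA HB HN.
  pose proof (cmul _ _ z (csin z) (ccos z)) as csc.
  pose proof (cmul _ _ z (ccos z) (ccos z)) as ccc.
  pose proof (cmul _ _ z (csin z) (csin z)) as css.
  pose proof (cminus _ _ z (cplus _ _ z csc (cmul _ _ z HB ccc)) (cmul _ _ z HA csc)) as num.
  pose proof (cplus _ _ z (cplus _ _ z css (cmul _ _ z HB csc)) (cmul _ _ z HA ccc)) as den.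
  pose proof (cinv _ z den HN) as iden.
  split.
  - exact (cmul _ _ z num iden).
  - exact iden.
Qed.

Lemma close (f g : R -> R) L M eps : ex_RInt f 0 (2*PI) -> ex_RInt g 0 (2*PI) ->
  RInt g 0 (2*PI) = L -> (forall t, Rabs (f t - g t) <= M) -> 2*PI*M < eps ->
  Rabs (RInt f 0 (2*PI) - L) < eps.
Proof.
  intros Hf Hg HL HM He. rewrite <- HL.
  assert (Hpi := PI_RGT_0).
  assert (E := RInt_minus (V:=R_CompleteNormedModule) f g 0 (2*PI) Hf Hg).
  change (RInt (fun x => f x - g x) 0 (2*PI) = RInt f 0 (2*PI) - RInt g 0 (2*PI)) in E.
  rewrite <- E.
  eapply Rle_lt_trans; [apply abs_RInt_le_const|].
  - lra.
  - apply (ex_RInt_minus (V:=R_NormedModule)); auto.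
  - intros t _. apply HM.
  - lra.
Qed.

Theorem lemma5p7 (Omega : R * R -> Prop) (alpha beta : R -> R -> R)
  (HOmega : open Omega)
  (Halpha : C1_on Omega alpha) (Hbeta : C1_on Omega beta)
  (HDelta : forall x y : R, Omega (x, y) ->
              4 * alpha x y - (beta x y) ^ 2 > 0)
  (Hrigid : rigid Omega alpha beta)
  (xi eta : R) (Hzeta : Omega (xi, eta)) :
  filterlim (fun r : R => circle_int alpha beta (Zinv alpha beta xi eta) xi eta r)
    (at_right 0)
    (locally (2 * PI * fst (jA alpha beta xi eta),
              2 * PI * snd (jA alpha beta xi eta))).
Proof.
  set (a0 := alpha xi eta). set (b0 := beta xi eta).
  assert (HD0 : 0 < 4*a0 - b0^2) by (apply HDelta; exact Hzeta).
  destruct (loc_lip Omega alpha (xi, eta) HOmega Halpha Hzeta) as [dA [MA [HdA [HMA HA]]]].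
  destruct (loc_lip Omega beta (xi, eta) HOmega Hbeta Hzeta) as [dB [MB [HdB [HMB HB]]]].
  simpl in HA, HB. fold a0 in HA. fold b0 in HB.
  set (m := (4*a0 - b0^2)/(4*(1+a0))).
  set (K := 1 + Rabs a0 + Rabs b0).
  set (C := 4*K/(m*m)).
  set (L1 := MA + MB + 1).
  assert (Hm : 0 < m) by (unfold m; apply Rdiv_lt_0_compat; nra).
  assert (HK : 0 < K) by (unfold K; pose proof (Rabs_pos a0); pose proof (Rabs_pos b0); lra).
  assert (HC : 0 < C) by (unfold C; apply Rdiv_lt_0_compat; nra).
  assert (HL : 0 < L1) by (unfold L1; lra).
  assert (Hpi := PI_RGT_0).
  pose proof (is_RInt_unique _ _ _ _ (int_F1 a0 b0 HD0)) as I1.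
  pose proof (is_RInt_unique _ _ _ _ (int_F2 a0 b0 HD0)) as I2.
  apply filterlim_locally. intros eps.
  assert (He := cond_pos eps).
  set (dl := Rmin (Rmin dA dB) (Rmin (m/(4*L1)) (eps/(4*PI*C*L1)))).
  assert (Hdl1 : dl <= dA) by (unfold dl; eapply Rle_trans; [apply Rmin_l|apply Rmin_l]).
  assert (Hdl2 : dl <= dB) by (unfold dl; eapply Rle_trans; [apply Rmin_l|apply Rmin_r]).
  assert (Hdl3 : dl <= m/(4*L1)) by (unfold dl; eapply Rle_trans; [apply Rmin_r|apply Rmin_l]).
  assert (Hdl4 : dl <= eps/(4*PI*C*L1)) by (unfold dl; eapply Rle_trans; [apply Rmin_r|apply Rmin_r]).
  assert (Hdl : 0 < dl).
  { unfold dl. apply Rmin_glb_lt; apply Rmin_glb_lt; auto; apply Rdiv_lt_0_compat; auto.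
    lra. apply Rmult_lt_0_compat; [|lra]. apply Rmult_lt_0_compat; [|lra]. lra. }
  exists (mkposreal dl Hdl). intros r Hr Hr0.
  change (Rabs (r - 0) < dl) in Hr. rewrite Rminus_0_r, Rabs_right in Hr by lra.
  set (A := fun t => alpha (xi + r * cos t) (eta + r * sin t)).
  set (B := fun t => beta (xi + r * cos t) (eta + r * sin t)).
  assert (Hpt : forall t, Omega (xi + r * cos t, eta + r * sin t) /\
     Rabs (A t - a0) + Rabs (B t - b0) <= 2 * L1 * r).
  { intros t.
    assert (Hc : Rabs (xi + r * cos t - xi) <= r).
    { replace (xi + r * cos t - xi) with (r * cos t) by ring. rewrite Rabs_mult, (Rabs_right r) by lra.
      pose proof (abs_cos t). nra. }
    assert (Hs : Rabs (eta + r * sin t - eta) <= r).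
    { replace (eta + r * sin t - eta) with (r * sin t) by ring. rewrite Rabs_mult, (Rabs_right r) by lra.
      pose proof (abs_sin t). nra. }
    destruct (HA (xi + r * cos t) (eta + r * sin t)) as [HO HAb]; [lra|lra|].
    destruct (HB (xi + r * cos t) (eta + r * sin t)) as [_ HBb]; [lra|lra|].
    split; [exact HO|]. unfold A, B, L1. nra. }
  assert (Hpert : forall t, m/2 <= NN (A t) (B t) t /\
     Rabs (F1 (A t) (B t) t - F1 a0 b0 t) <= C * (2 * L1 * r) /\
     Rabs (F2 (A t) (B t) t - F2 a0 b0 t) <= C * (2 * L1 * r)).
  { intros t. destruct (Hpt t) as [_ Hd].
    assert (Hd2 : 2 * L1 * r <= m/2).
    { apply Rle_trans with (2 * L1 * (m/(4*L1))). apply Rmult_le_compat_l; lra.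
      right; field; lra. }
    destruct (perturb a0 b0 (A t) (B t) t m K HD0 eq_refl eq_refl ltac:(lra)) as [H1 [H2 H3]].
    fold C in H2, H3.
    pose proof (Rabs_pos (A t - a0)). pose proof (Rabs_pos (B t - b0)).
    split; [exact H1|]. split; nra. }
  assert (Eq : circle_int alpha beta (Zinv alpha beta xi eta) xi eta r =
     (RInt (fun t => F1 (A t) (B t) t) 0 (2*PI), RInt (fun t => F2 (A t) (B t) t) 0 (2*PI))).
  { unfold circle_int, Zinv. cbv beta zeta. f_equal; apply RInt_ext; intros t _;
    destruct (Hpert t) as [HN _];
    destruct (integrand_eq (A t) (B t) r t xi eta ltac:(lra) ltac:(lra)) as [E1 E2];
    unfold A, B in E1, E2 |- *; [exact E1|exact E2]. }
  assert (Hcont : forall z, continuous (fun t => F1 (A t) (B t) t) z /\ continuous (fun t => F2 (A t) (B t) t) z).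
  { intros z. destruct (Hpert z) as [HN _]. destruct (Hpt z) as [HOz _].
    apply contF.
    - exact (cont_circle Omega alpha xi eta r z HOmega Halpha HOz).
    - exact (cont_circle Omega beta xi eta r z HOmega Hbeta HOz).
    - lra. }
  assert (Hex1 : ex_RInt (fun t => F1 (A t) (B t) t) 0 (2*PI))
    by (apply (ex_RInt_continuous (V:=R_CompleteNormedModule)); intros z _; apply Hcont).
  assert (Hex2 : ex_RInt (fun t => F2 (A t) (B t) t) 0 (2*PI))
    by (apply (ex_RInt_continuous (V:=R_CompleteNormedModule)); intros z _; apply Hcont).
  assert (Hsmall : 2 * PI * (C * (2 * L1 * r)) < eps).
  { apply Rlt_le_trans with (2 * PI * (C * (2 * L1 * (eps/(4*PI*C*L1))))).
    - apply Rmult_lt_compat_l; [lra|]. apply Rmult_lt_compat_l; [lra|].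
      apply Rmult_lt_compat_l; lra.
    - right. field. repeat split; lra. }
  rewrite Eq. apply ballP; split; simpl.
  - change (Rabs (RInt (fun t => F1 (A t) (B t) t) 0 (2*PI) - 2 * PI * (b0 / sqrt (4*a0 - b0^2))) < eps).
    apply (close _ (F1 a0 b0) _ (C * (2 * L1 * r))); auto.
    + exists (2 * PI * (b0 / sqrt (4*a0 - b0^2))). apply int_F1; exact HD0.
    + intros t. apply Hpert.
  - change (Rabs (RInt (fun t => F2 (A t) (B t) t) 0 (2*PI) - 2 * PI * (2 / sqrt (4*a0 - b0^2))) < eps).
    apply (close _ (F2 a0 b0) _ (C * (2 * L1 * r))); auto.
    + exists (2 * PI * (2 / sqrt (4*a0 - b0^2))). apply int_F2; exact HD0.
    + intros t. apply Hpert.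
Qed.
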